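(* Let $T$ and $T_{ij}$ ($1\le i\le s$, $1\le j\le r_i$) be quasiperiodic trigonometric polynomials on $\mathbb R^n$, and let $V=\bigcup_{i=1}^s\bigcap_{j=1}^{r_i}V_{ij}$ where each $V_{ij}$ is either $\{x:T_{ij}(x)=0\}$ or $\{x:T_{ij}(x)>0\}$. Let $A_1,\dots,A_N\in\mathbb R^n$ be free generators of the subgroup $\mathcal A$ of $(\mathbb R^n,+)$ generated by all frequencies of $T$ and of the $T_{ij}$ (so $\mathcal A=(A_1)\oplus\dots\oplus(A_N)$), and let $\Phi(x)=(A_1x,\dots,A_Nx)$. If $\Phi:\mathbb R^n\to\mathbb R^N$ is not injective (i.e. the orbit $\{\Phi(x)\bmod\mathbb Z^N\}$ has dimension less than $n$), then $V$ has no isolated points, and for every bounded $\Omega\subset\mathbb R^n$ with nonzero volume the mean value $M_\Omega$ of $T$ over the isolated points of $V$ is equal to zero.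
   Context: A quasiperiodic trigonometric polynomial is a function $T(x)=\sum_{k=1}^p c_k\cos 2\pi\alpha_kx+d_k\sin2\pi\alpha_kx$ with $c_k,d_k\in\mathbb R$ and frequencies $\alpha_k\in\mathbb R^n$ ($\alpha_kx$ the standard scalar product). For $\lambda>0$, $S_\Omega(\lambda)$ is the sum of the values of $T$ at the isolated points of $V$ lying in $\lambda\Omega$, and $M_\Omega=\lim_{\lambda\to\infty}S_\Omega(\lambda)/\operatorname{Vol}(\lambda\Omega)$. *)

(* Defs.v *)
From HB Require Import structures.
From mathcomp Require Import all_boot all_order all_algebra.
From mathcomp Require Import all_classical all_reals all_analysis.
Set Implicit Arguments. Unset Strict Implicit. Unset Printing Implicit Defensive.
Import Order.TTheory GRing.Theory Num.Theory.
Import numFieldNormedType.Exports.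
Local Open Scope classical_set_scope.
Local Open Scope ring_scope.

Definition dotp {R : realType} {n : nat} (a x : 'rV[R]_n) : R :=
  \sum_(i < n) a 0 i * x 0 i.

(* A quasiperiodic trigonometric polynomial, given by its list of terms
   (c_k, d_k, alpha_k) : T(x) = sum_k c_k cos(2 pi alpha_k x) + d_k sin(2 pi alpha_k x). *)
Definition qtp (R : realType) (n : nat) := seq (R * R * 'rV[R]_n).

Definition qtp_eval {R : realType} {n : nat} (T : qtp R n) (x : 'rV[R]_n) : R :=
  \sum_(t <- T) (t.1.1 * cos (2 * pi * dotp t.2 x)
                 + t.1.2 * sin (2 * pi * dotp t.2 x)).

Definition qtp_freqs {R : realType} {n : nat} (T : qtp R n) : seq 'rV[R]_n :=
  map snd T.

Definition in_Zspan_seq {R : realType} {n : nat} (fs : seq 'rV[R]_n) (v : 'rV[R]_n) : Prop :=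
  exists z : nat -> int, v = \sum_(k < size fs) (fs`_k) *~ z k.

Definition in_Zspan_fam {R : realType} {n N : nat} (A : 'I_N -> 'rV[R]_n) (v : 'rV[R]_n) : Prop :=
  exists z : 'I_N -> int, v = \sum_(k < N) (A k) *~ z k.

Definition Zfree {R : realType} {n N : nat} (A : 'I_N -> 'rV[R]_n) : Prop :=
  forall z : 'I_N -> int, \sum_(k < N) (A k) *~ z k = 0 -> forall k, z k = 0.

Definition free_generators {R : realType} {n N : nat} (fs : seq 'rV[R]_n)
  (A : 'I_N -> 'rV[R]_n) : Prop :=
  Zfree A /\
  (forall v, in_Zspan_seq fs v <-> in_Zspan_fam A v).

Definition Phi {R : realType} {n N : nat} (A : 'I_N -> 'rV[R]_n) (x : 'rV[R]_n) : 'rV[R]_N :=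
  \row_(k < N) dotp (A k) x.

Definition semialg_set {R : realType} {n s : nat} (r : 'I_s -> nat)
  (Tij : forall i : 'I_s, 'I_(r i) -> qtp R n)
  (kind : forall i : 'I_s, 'I_(r i) -> bool) : set 'rV[R]_n :=
  [set x | exists i : 'I_s, forall j : 'I_(r i),
     if kind i j then qtp_eval (Tij i j) x = 0 else 0 < qtp_eval (Tij i j) x].

Definition isolated_pt {R : realType} {n : nat} (V : set 'rV[R]_n) (x : 'rV[R]_n) : Prop :=
  V x /\ exists e : R, 0 < e /\
    forall y, V y -> (forall i, `|y 0 i - x 0 i| < e) -> y = x.

Definition bounded_rV {R : realType} {n : nat} (O : set 'rV[R]_n) : Prop :=
  exists M : R, forall x, O x -> forall i, `|x 0 i| <= M.

(* Lebesgue (outer) measure on R^n: infimum of total volumes of countable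
   covers by closed boxes [a_k, b_k]. *)
Definition box {R : realType} {n : nat} (a b : 'I_n -> R) : set 'rV[R]_n :=
  [set x | forall i, a i <= x 0 i <= b i].

Definition volume {R : realType} {n : nat} (O : set 'rV[R]_n) : \bar R :=
  ereal_inf [set S : \bar R | exists (a b : nat -> 'I_n -> R),
     (forall k i, a k i <= b k i) /\
     O `<=` \bigcup_k box (a k) (b k) /\
     S = (\sum_(0 <= k <oo) (\prod_(i < n) (b k i - a k i))%:E)%E].

Definition dilate {R : realType} {n : nat} (l : R) (O : set 'rV[R]_n) : set 'rV[R]_n :=
  [set l *: x | x in O].

Definition S_Omega {R : realType} {n : nat} (T : qtp R n) (V : set 'rV[R]_n)
  (O : set 'rV[R]_n) (l : R) : R :=
  (\sum_(x \in [set x | isolated_pt V x] `&` dilate l O) qtp_eval T x)%R.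

(* Main.v *)
Require Import Defs.
From HB Require Import structures.
From mathcomp Require Import all_boot all_order all_algebra.
From mathcomp Require Import all_classical all_reals all_analysis.
From mathcomp Require Import ring lra.
Import Order.TTheory GRing.Theory Num.Theory.
Import numFieldNormedType.Exports.
Local Open Scope classical_set_scope.
Local Open Scope ring_scope.

Lemma dotp_shift (R : realType) (n : nat) (a x d : 'rV[R]_n) (t : R) :
  dotp a (x + t *: d) = dotp a x + t * dotp a d.
Proof.
rewrite /dotp mulr_sumr -big_split /=; apply: eq_bigr => i _.
by rewrite !mxE mulrDr mulrCA.
Qed.

Lemma dotp_sub (R : realType) (n : nat) (a x y : 'rV[R]_n) :
  dotp a (x - y) = dotp a x - dotp a y.
Proof.
rewrite /dotp -sumrB; apply: eq_bigr => i _.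
by rewrite !mxE mulrBr.
Qed.

Lemma dotp_zsum (R : realType) (n N : nat) (A : 'I_N -> 'rV[R]_n) (z : 'I_N -> int)
  (d : 'rV[R]_n) : (forall k, dotp (A k) d = 0) ->
  dotp (\sum_(k < N) A k *~ z k) d = 0.
Proof.
move=> H; rewrite /dotp.
under eq_bigr do rewrite summxE mulr_suml.
rewrite exchange_big /=; apply: big1 => k _.
under eq_bigr do rewrite -scaler_int mxE -mulrA.
rewrite -mulr_sumr; by move: (H k); rewrite /dotp => ->; rewrite mulr0.
Qed.

Lemma qtp_inv (R : realType) (n : nat) (T : qtp R n) (x d : 'rV[R]_n) (t : R) :
  (forall a, a \in qtp_freqs T -> dotp a d = 0) ->
  qtp_eval T (x + t *: d) = qtp_eval T x.
Proof.
move=> H; rewrite /qtp_eval; apply: eq_big_seq => u uT.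
rewrite dotp_shift H ?mulr0 ?addr0 //.
by rewrite /qtp_freqs; apply: map_f.
Qed.

Lemma in_span_mem (R : realType) (n : nat) (fs : seq 'rV[R]_n) (a : 'rV[R]_n) :
  a \in fs -> in_Zspan_seq fs a.
Proof.
move=> afs; exists (fun k => ((k == index a fs)%N : int)).
have hi : (index a fs < size fs)%N by rewrite index_mem.
rewrite (bigD1 (Ordinal hi)) //= eqxx mulr1z nth_index // big1 ?addr0 // => k hk.
have -> : ((k : nat) == index a fs) = false.
  by apply/negbTE; apply: contra hk => /eqP e; apply/eqP/val_inj.
by rewrite mulr0z.
Qed.

Theorem lemma2 (R : realType) (n s : nat) (r : 'I_s -> nat)
  (T : qtp R n) (Tij : forall i : 'I_s, 'I_(r i) -> qtp R n)
  (kind : forall i : 'I_s, 'I_(r i) -> bool)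
  (N : nat) (A : 'I_N -> 'rV[R]_n) :
  free_generators
    (qtp_freqs T ++ flatten [seq flatten [seq qtp_freqs (Tij i j) | j <- enum 'I_(r i)]
                              | i <- enum 'I_s]) A ->
  ~ injective (Phi A) ->
  (forall x, ~ isolated_pt (semialg_set Tij kind) x) /\
  (forall O : set 'rV[R]_n, bounded_rV O -> volume O != 0%E ->
     (S_Omega T (semialg_set Tij kind) O l / fine (volume (dilate l O)))
       @[l --> +oo] --> (0 : R)).
Proof.
set fs := (_ ++ _) => [[_ Hspan]] ninj.
have [x0 [y0 [hxy nxy]]] : exists x y, Phi A x = Phi A y /\ x <> y.
  apply: contrapT => H; apply: ninj => a b hab; apply: contrapT => nab.
  by apply: H; exists a, b.
set d := x0 - y0.
have dnz : d != 0 by rewrite subr_eq0; apply/eqP.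
have HA : forall k, dotp (A k) d = 0.
  move=> k; have := congr1 (fun M : 'rV[R]_N => M 0 k) hxy => /=.
  by rewrite !mxE dotp_sub => ->; rewrite subrr.
have Hfs : forall a, a \in fs -> dotp a d = 0.
  move=> a /in_span_mem /Hspan [z ->]; exact: dotp_zsum.
have Hij : forall i j a, a \in qtp_freqs (Tij i j) -> dotp a d = 0.
  move=> i j a ha; apply: Hfs; rewrite /fs mem_cat; apply/orP; right.
  apply/flatten_mapP; exists i; first by rewrite mem_enum.
  by apply/flatten_mapP; exists j; first by rewrite mem_enum.
have Vinv : forall x t, semialg_set Tij kind x -> semialg_set Tij kind (x + t *: d).
  move=> x t [i Hi]; exists i => j.
  by rewrite qtp_inv //; [exact: Hi | exact: Hij].
have noiso : forall x, ~ isolated_pt (semialg_set Tij kind) x.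
  move=> x [Vx [e [e0 He]]].
  set S := 1 + \sum_(i < n) `|d 0 i|.
  have S0 : 0 < S by rewrite /S ltr_pwDl // sumr_ge0.
  have dS : forall i, `|d 0 i| < S.
    move=> i; rewrite /S (bigD1 i) //=.
    have : 0 <= \sum_(i0 < n | i0 != i) `|d 0 i0| by rewrite sumr_ge0.
    lra.
  set t := e / S.
  have t0 : 0 < t by rewrite divr_gt0.
  have := He (x + t *: d) (Vinv x t Vx).
  move=> H.
  have : x + t *: d = x.
    apply: H => i.
    rewrite [X in `|X|](_ : _ = t * d 0 i); last first.
      by rewrite [in LHS]mxE [(t *: d) 0 i]mxE; ring.
    rewrite normrM gtr0_norm // /t mulrAC ltr_pdivrMr //.
    by rewrite ltr_pM2l.
  move/eqP; rewrite -subr_eq0 addrC addKr scaler_eq0 (negbTE dnz) orbF.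
  by rewrite (gt_eqF t0).
split => // O _ _.
have -> : (fun l => S_Omega T (semialg_set Tij kind) O l / fine (volume (dilate l O)))
   = fun _ => 0.
  apply: funext => l; rewrite /S_Omega.
  have -> : [set x | isolated_pt (semialg_set Tij kind) x] `&` dilate l O = set0.
    by apply/seteqP; split => x // [/noiso].
  by rewrite fsbig_set0 mul0r.
exact: cvg_cst.
Qed.
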